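(* Let $(H,G,\alpha,f)$ be a normalized crossed system such that $f$ is symmetric, i.e. $f(g_1,g_2)=f(g_2,g_1)$ for all $g_1,g_2\in G$. Then $$Z(H\#_\alpha^f G)=\{(h,g)\in H^G\times Z(G)\ :\ g\triangleright h'=h^{-1}h'h\ \text{for all } h'\in H\},$$ where $H^G=\{h\in H: g\triangleright h=h \text{ for all } g\in G\}$.
   Context: For groups $H,G$ and a map $\alpha:G\to\mathrm{Aut}(H)$ write $g\triangleright h:=\alpha(g)(h)$. A normalized crossed system is a quadruple $(H,G,\alpha,f)$ with maps $\alpha:G\to\mathrm{Aut}(H)$, $f:G\times G\to H$, $f(1,1)=1$, such that for all $g_1,g_2,g_3\in G$, $h\in H$: (WA) $g_1\triangleright(g_2\triangleright h)=f(g_1,g_2)\big((g_1g_2)\triangleright h\big)f(g_1,g_2)^{-1}$ and (CC) $f(g_1,g_2)f(g_1g_2,g_3)=\big(g_1\triangleright f(g_2,g_3)\big)f(g_1,g_2g_3)$. The crossed product $H\#_\alpha^f G$ is the group on the set $H\times G$ with multiplication $(h_1,g_1)\cdot(h_2,g_2)=\big(h_1(g_1\triangleright h_2)f(g_1,g_2),g_1g_2\big)$. *)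

(* Defs.v *)
Set Implicit Arguments.

Record group_laws (T : Type) (mul : T -> T -> T) (one : T) (inv : T -> T) : Prop := {
  gl_assoc : forall x y z, mul x (mul y z) = mul (mul x y) z;
  gl_mul1l : forall x, mul one x = x;
  gl_mul1r : forall x, mul x one = x;
  gl_mulVl : forall x, mul (inv x) x = one;
  gl_mulVr : forall x, mul x (inv x) = one
}.

Definition is_automorphism (T : Type) (mul : T -> T -> T) (a : T -> T) : Prop :=
  (forall x y, a (mul x y) = mul (a x) (a y)) /\
  (forall x y, a x = a y -> x = y) /\
  (forall y, exists x, a x = y).

(** Normalized crossed system (H, G, alpha, f); [alpha g h] is  g |> h. *)
Definition normalized_crossed_system (H G : Type)
  (mulH : H -> H -> H) (oneH : H) (invH : H -> H)
  (mulG : G -> G -> G) (oneG : G)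
  (alpha : G -> H -> H) (f : G -> G -> H) : Prop :=
  (forall g, is_automorphism mulH (alpha g)) /\
  f oneG oneG = oneH /\
  (forall g1 g2 h, alpha g1 (alpha g2 h) =
       mulH (mulH (f g1 g2) (alpha (mulG g1 g2) h)) (invH (f g1 g2))) /\
  (forall g1 g2 g3, mulH (f g1 g2) (f (mulG g1 g2) g3) =
       mulH (alpha g1 (f g2 g3)) (f g1 (mulG g2 g3))).

Definition cp_mul (H G : Type) (mulH : H -> H -> H) (mulG : G -> G -> G)
  (alpha : G -> H -> H) (f : G -> G -> H) (x y : H * G) : H * G :=
  let (h1, g1) := x in let (h2, g2) := y in
  (mulH (mulH h1 (alpha g1 h2)) (f g1 g2), mulG g1 g2).

Definition in_center (T : Type) (mul : T -> T -> T) (x : T) : Prop :=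
  forall y, mul x y = mul y x.

Definition in_fixed (H G : Type) (alpha : G -> H -> H) (h : H) : Prop :=
  forall g, alpha g h = h.

(* Main.v *)
Require Import Defs.

Lemma rcancel (T : Type) (mul : T -> T -> T) (one : T) (inv : T -> T)
  (L : group_laws mul one inv) x y z : mul x y = mul z y -> x = z.
Proof.
  intro E. assert (E2 : mul (mul x y) (inv y) = mul (mul z y) (inv y)) by (rewrite E; reflexivity).
  rewrite <- !(gl_assoc L), !(gl_mulVr L), !(gl_mul1r L) in E2. exact E2.
Qed.

Lemma lcancel (T : Type) (mul : T -> T -> T) (one : T) (inv : T -> T)
  (L : group_laws mul one inv) x y z : mul y x = mul y z -> x = z.
Proof.
  intro E. assert (E2 : mul (inv y) (mul y x) = mul (inv y) (mul y z)) by (rewrite E; reflexivity).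
  rewrite !(gl_assoc L), !(gl_mulVl L), !(gl_mul1l L) in E2. exact E2.
Qed.

Arguments rcancel [T mul one inv] L [x y z].
Arguments lcancel [T mul one inv] L [x y z].

Theorem corollary1p11 (H G : Type)
  (mulH : H -> H -> H) (oneH : H) (invH : H -> H)
  (mulG : G -> G -> G) (oneG : G) (invG : G -> G)
  (HH : group_laws mulH oneH invH) (HG : group_laws mulG oneG invG)
  (alpha : G -> H -> H) (f : G -> G -> H)
  (Hcs : normalized_crossed_system mulH oneH invH mulG oneG alpha f)
  (Hsym : forall g1 g2, f g1 g2 = f g2 g1) :
  forall (h : H) (g : G),
    in_center (cp_mul mulH mulG alpha f) (h, g) <->
    (in_fixed alpha h /\ in_center mulG g /\
     (forall h', alpha g h' = mulH (mulH (invH h) h') h)).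
Proof.
  destruct Hcs as [Aut _].
  assert (A1 : forall g, alpha g oneH = oneH).
  { intro g0. destruct (Aut g0) as [Hm _].
    apply (lcancel HH) with (y := alpha g0 oneH).
    rewrite <- Hm, !(gl_mul1r HH). reflexivity. }
  intros h g. unfold in_center, cp_mul. split.
  - intro C.
    assert (Fx : in_fixed alpha h).
    { intro g'. specialize (C (oneH, g')). injection C as C1 _.
      rewrite A1, (gl_mul1r HH), (gl_mul1l HH), (Hsym g' g) in C1.
      symmetry. exact (rcancel HH C1). }
    split; [exact Fx|]. split.
    + intro g'. specialize (C (oneH, g')). injection C as _ C2. exact C2.
    + intro h'. specialize (C (h', oneG)). injection C as C1 _.
      rewrite Fx, (Hsym oneG g) in C1. apply (rcancel HH) in C1.
      apply (lcancel HH) with (y := h). rewrite C1, (gl_assoc HH), (gl_assoc HH),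
        (gl_mulVr HH), (gl_mul1l HH). reflexivity.
  - intros [Fx [Cg Ac]] [h' g'].
    rewrite Ac, Fx, (Hsym g' g), (Cg g'). f_equal. f_equal.
    rewrite !(gl_assoc HH), (gl_mulVr HH), (gl_mul1l HH). reflexivity.
Qed.
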